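(* Let $T$ be an almost commutative ring, $t\mapsto\bar t$ an involution on $T$ and $\lambda\in\mathrm{center}(T)$. Then $T$ is a direct limit (directed union) of involution invariant subrings $T_j$ ($j\in\Psi$) containing $\lambda$ such that for every $j\in\Psi$ there is a subring $C'_j\subseteq\mathrm{center}(T_j)$ for which $T_j$ is a Noetherian $C_j$-module, where $C_j$ is the subring of $T_j$ consisting of all finite sums of elements of the form $c\bar c$ and $-c\bar c$ with $c\in C'_j$.
   Context: Rings are associative with $1\neq0$. A ring is almost commutative if it is finitely generated as a module over its center. An involution is a map $t\mapsto\bar t$ with $\overline{t+s}=\bar t+\bar s$, $\overline{ts}=\bar s\bar t$, $\bar{\bar t}=t$; a subring is involution invariant if it is mapped into itself by the involution. *)

(* Defs.v *)
From HB Require Import structures.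
From mathcomp Require Import all_boot all_algebra.
Set Implicit Arguments. Unset Strict Implicit. Unset Printing Implicit Defensive.
Import GRing.Theory.
Local Open Scope ring_scope.

Section Defs.
Variable T : nzRingType.

Definition central (x : T) : Prop := forall y : T, x * y = y * x.

Definition almost_commutative : Prop :=
  exists (n : nat) (g : 'I_n -> T),
    forall x : T, exists c : 'I_n -> T,
      (forall i, central (c i)) /\ x = \sum_(i < n) c i * g i.

Definition is_involution (bar : T -> T) : Prop :=
  [/\ forall t s, bar (t + s) = bar t + bar s,
      forall t s, bar (t * s) = bar s * bar t &
      forall t, bar (bar t) = t].

Definition is_subring (S : T -> Prop) : Prop :=
  S 1 /\ forall x y, S x -> S y -> S (x - y) /\ S (x * y).

Definition inv_invariant (bar : T -> T) (S : T -> Prop) : Prop :=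
  forall x, S x -> S (bar x).

Definition psubset (A B : T -> Prop) : Prop := forall x, A x -> B x.

Definition in_center_of (C' S : T -> Prop) : Prop :=
  psubset C' S /\ forall c, C' c -> forall y, S y -> c * y = y * c.

Definition norm_sums (bar : T -> T) (C' : T -> Prop) : T -> Prop :=
  fun x => exists s : seq (bool * T),
    (forall p, p \in s -> C' p.2) /\
    x = \sum_(p <- s) (-1) ^+ p.1 * (p.2 * bar p.2).

Definition is_submodule (R M N : T -> Prop) : Prop :=
  [/\ psubset N M, N 0,
      forall x y, N x -> N y -> N (x - y) &
      forall r x, R r -> N x -> N (r * x)].

Definition noetherian_module (R M : T -> Prop) : Prop :=
  forall Ns : nat -> (T -> Prop),
    (forall n, is_submodule R M (Ns n)) ->
    (forall n, psubset (Ns n) (Ns n.+1)) ->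
    exists N, forall n, (N <= n)%N -> forall x, Ns n x <-> Ns N x.

End Defs.

(* Main.v *)
Require Import Defs.
From mathcomp Require Import all_boot all_algebra.
From Stdlib Require Import Classical ClassicalEpsilon.
Set Implicit Arguments. Unset Strict Implicit. Unset Printing Implicit Defensive.
Import GRing.Theory.
Local Open Scope ring_scope.

Lemma zmod_aux (V : zmodType) (v w u one : V) : w + v = (one + v) + (w + u) + (- one - u).
Proof. by rewrite addrACA addrK [one + v - one]addrAC subrr add0r addrC. Qed.

Section Aux.
Variable T : nzRingType.
Implicit Types (A B S R M : T -> Prop) (x y z : T).

Lemma central0 : central (0 : T).
Proof. by move=> y; rewrite mul0r mulr0. Qed.
Lemma central1 : central (1 : T).
Proof. by move=> y; rewrite mul1r mulr1. Qed.
Lemma centralB x y : central x -> central y -> central (x - y).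
Proof. by move=> hx hy z; rewrite mulrBl mulrBr hx hy. Qed.
Lemma centralD x y : central x -> central y -> central (x + y).
Proof. by move=> hx hy z; rewrite mulrDl mulrDr hx hy. Qed.
Lemma centralM x y : central x -> central y -> central (x * y).
Proof. by move=> hx hy z; rewrite -mulrA hy mulrA hx mulrA. Qed.
Lemma centralX x n : central x -> central (x ^+ n).
Proof. by move=> hx; elim: n => [|n IH]; [rewrite expr0; apply: central1|rewrite exprS; apply: centralM]. Qed.

Lemma sub_0 S : is_subring S -> S 0.
Proof. by case=> h1 h; have [] := h 1 1 h1 h1; rewrite subrr. Qed.
Lemma sub_B S x y : is_subring S -> S x -> S y -> S (x - y).
Proof. by case=> _ h hx hy; case: (h x y hx hy). Qed.
Lemma sub_M S x y : is_subring S -> S x -> S y -> S (x * y).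
Proof. by case=> _ h hx hy; case: (h x y hx hy). Qed.
Lemma sub_N S x : is_subring S -> S x -> S (- x).
Proof. by move=> hS hx; rewrite -sub0r; apply: sub_B => //; apply: sub_0. Qed.
Lemma sub_D S x y : is_subring S -> S x -> S y -> S (x + y).
Proof. by move=> hS hx hy; rewrite -[y]opprK; apply: sub_B => //; apply: sub_N. Qed.
Lemma sub_1 S : is_subring S -> S 1.
Proof. by case. Qed.
Lemma sub_sum S d (F : nat -> T) : is_subring S -> (forall i, (i < d)%N -> S (F i)) ->
  S (\sum_(i < d) F i).
Proof.
move=> hS; elim: d => [|d IH] h; first by rewrite big_ord0; apply: sub_0.
rewrite big_ord_recr /=; apply: sub_D => //; last exact: h.
by apply: IH => i hi; apply: h; apply: ltnW.
Qed.
Lemma sub_X S x n : is_subring S -> S x -> S (x ^+ n).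
Proof. by move=> hS hx; elim: n => [|n IH]; [rewrite expr0; apply: sub_1|rewrite exprS; apply: sub_M]. Qed.
Lemma sub_nat S n : is_subring S -> S n%:R.
Proof. by move=> hS; elim: n => [|n IH]; [apply: sub_0|rewrite -addn1 natrD; apply: sub_D => //; apply: sub_1]. Qed.

Definition csub A := is_subring A /\ forall a, A a -> central a.

Lemma center_sub : is_subring (@central T).
Proof. split; first exact: central1. by move=> x y hx hy; split; [apply: centralB|apply: centralM]. Qed.

Definition gen (G : T -> Prop) : T -> Prop :=
  fun x => forall S, is_subring S -> (forall g, G g -> S g) -> S x.
Lemma gen_sub G : is_subring (gen G).
Proof.
split; first by move=> S hS _; exact: (sub_1 hS).
by move=> x y hx hy; split => S hS hG; [apply: (sub_B hS)|apply: (sub_M hS)]; [apply: hx|apply: hy|apply: hx|apply: hy].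
Qed.
Lemma gen_min G S : is_subring S -> (forall g, G g -> S g) -> psubset (gen G) S.
Proof. by move=> hS hG x hx; apply: hx. Qed.
Lemma gen_in G g : G g -> gen G g.
Proof. by move=> hg S _ h; apply: h. Qed.
Lemma gen_mono G G' : psubset G G' -> psubset (gen G) (gen G').
Proof. by move=> h x hx S hS hG; apply: hx => // g hg; apply: hG; apply: h. Qed.

Fixpoint span A (xs : seq T) : T -> Prop :=
  match xs with
  | [::] => fun y => y = 0
  | x :: xs => fun y => exists a m, [/\ A a, span A xs m & y = a * x + m]
  end.

Lemma span0 A xs : is_subring A -> span A xs 0.
Proof.
move=> hA; elim: xs => [|x xs IH] //=.
by exists 0, 0; split => //; [apply: sub_0|rewrite mul0r addr0].
Qed.
Lemma spanB A xs y z : is_subring A -> span A xs y -> span A xs z -> span A xs (y - z).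
Proof.
move=> hA; elim: xs y z => [|x xs IH] y z /=; first by move=> -> ->; rewrite subr0.
move=> [a [m [ha hm ->]]] [b [n [hb hn ->]]].
exists (a - b), (m - n); split; [exact: sub_B|exact: IH|].
by rewrite mulrBl opprD !addrA; congr (_ + _); rewrite addrAC.
Qed.
Lemma spanN A xs y : is_subring A -> span A xs y -> span A xs (- y).
Proof. by move=> hA hy; rewrite -sub0r; apply: spanB => //; apply: span0. Qed.
Lemma spanD A xs y z : is_subring A -> span A xs y -> span A xs z -> span A xs (y + z).
Proof. by move=> hA hy hz; rewrite -[z]opprK; apply: spanB => //; apply: spanN. Qed.
Lemma spanZ A xs r y : is_subring A -> A r -> span A xs y -> span A xs (r * y).
Proof.
move=> hA hr; elim: xs y => [|x xs IH] y /=; first by move=> ->; rewrite mulr0.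
move=> [a [m [ha hm ->]]]; exists (r * a), (r * m); split; [exact: sub_M|exact: IH|].
by rewrite mulrDr mulrA.
Qed.
Lemma span_sum A xs d (F : nat -> T) : is_subring A -> (forall i, (i < d)%N -> span A xs (F i)) ->
  span A xs (\sum_(i < d) F i).
Proof.
move=> hA; elim: d => [|d IH] h; first by rewrite big_ord0; apply: span0.
rewrite big_ord_recr /=; apply: spanD => //; last exact: h.
by apply: IH => i hi; apply: h; apply: ltnW.
Qed.
Lemma span_mono A B xs : psubset A B -> psubset (span A xs) (span B xs).
Proof.
move=> hAB; elim: xs => [|x xs IH] y //=.
by move=> [a [m [ha hm ->]]]; exists a, m; split; auto.
Qed.
Lemma span_cat A l1 l2 y1 y2 : span A l1 y1 -> span A l2 y2 -> span A (l1 ++ l2) (y1 + y2).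
Proof.
elim: l1 y1 => [|x l1 IH] y1 /=; first by move=> -> h; rewrite add0r.
move=> [a [m [ha hm ->]]] h2; exists a, (m + y2); split => //; first exact: IH.
by rewrite addrA.
Qed.
Lemma span_mulr A ys b z : span A ys b -> span A (map (fun y => y * z) ys) (b * z).
Proof.
elim: ys b => [|y ys IH] b /=; first by move=> ->; rewrite mul0r.
move=> [a [m [ha hm ->]]]; exists a, (m * z); split => //; first exact: IH.
by rewrite mulrDl mulrA.
Qed.
Definition tlist (ys zs : seq T) := flatten (map (fun z => map (fun y => y * z) ys) zs).
Lemma span_trans A B ys zs y : psubset B (span A ys) -> span B zs y -> span A (tlist ys zs) y.
Proof.
move=> hB; elim: zs y => [|z zs IH] y /=; first by [].
move=> [b [m [hb hm ->]]]; apply: span_cat; last exact: IH.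
by apply: span_mulr; apply: hB.
Qed.
Lemma span_in A xs x : is_subring A -> x \in xs -> span A xs x.
Proof.
move=> hA; elim: xs => [|y xs IH] //=; rewrite inE => /orP [/eqP ->|hx].
  by exists 1, 0; split; [apply: sub_1|apply: span0|rewrite mul1r addr0].
by exists 0, x; split; [apply: sub_0|apply: IH|rewrite mul0r add0r].
Qed.


Lemma chain_le (Ns : nat -> T -> Prop) m n : (forall n, psubset (Ns n) (Ns n.+1)) ->
  (m <= n)%N -> psubset (Ns m) (Ns n).
Proof.
move=> hc; elim: n => [|n IH]; first by rewrite leqn0 => /eqP ->.
rewrite leq_eqVlt => /orP [/eqP ->|hlt] //.
by move=> x hx; apply: hc; apply: IH.
Qed.

Lemma noeth_intro R M :
  (forall Ns : nat -> (T -> Prop), (forall n, is_submodule R M (Ns n)) ->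
    (forall n, psubset (Ns n) (Ns n.+1)) ->
    exists N, forall n, (N <= n)%N -> psubset (Ns n) (Ns N)) ->
  noetherian_module R M.
Proof.
move=> h Ns hs hc; have [N hN] := h Ns hs hc; exists N => n hn x; split; first exact: hN.
exact: chain_le.
Qed.

Lemma noeth_elim R M Ns : noetherian_module R M -> (forall n, is_submodule R M (Ns n)) ->
    (forall n, psubset (Ns n) (Ns n.+1)) ->
    exists N, forall n, (N <= n)%N -> psubset (Ns n) (Ns N).
Proof. by move=> h hs hc; have [N hN] := h Ns hs hc; exists N => n hn x /(hN n hn x). Qed.

Lemma noeth_scal R (R' : T -> Prop) M : psubset R' R -> noetherian_module R' M -> noetherian_module R M.
Proof.
move=> hR h Ns hs hc; apply: h => // n; have [h1 h2 h3 h4] := hs n.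
by split => // r x hr; apply: h4; apply: hR.
Qed.

Lemma noeth_mod R M (M' : T -> Prop) : psubset M M' -> noetherian_module R M' -> noetherian_module R M.
Proof.
move=> hM h Ns hs hc; apply: h => // n; have [h1 h2 h3 h4] := hs n.
by split => // x hx; apply: hM; apply: h1.
Qed.

Lemma least_nat (P : nat -> Prop) : (exists m, P m) -> exists m, P m /\ forall k, P k -> (m <= k)%N.
Proof.
move=> [m hm]; elim: m {-2}m (leqnn m) hm => [|m IH] k hk hPk.
  by exists k; split => // j _; move: hk; rewrite leqn0 => /eqP ->.
case: (classic (exists j, P j /\ (j < k)%N)) => [[j [hj hjk]]|hno].
  by apply: (IH j) => //; rewrite -ltnS (leq_trans hjk hk).
exists k; split => // j hj; rewrite leqNgt; apply/negP => hjk; apply: hno; exists j; split => //.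
Qed.

Definition Z1 : T -> Prop := fun x => exists k : int, x = k%:~R.

Lemma Z1_csub : csub Z1.
Proof.
split; last by move=> a [k ->] y; rewrite commr_int.
split; first by exists 1.
move=> x y [k ->] [l ->]; split; [exists (k - l); rewrite intrB|exists (k * l); rewrite intrM] => //.
Qed.

Lemma Z1_absz (I : T -> Prop) k : is_subring Z1 -> I 0 -> (forall x y, I x -> I y -> I (x - y)) ->
  (I (k%:~R) <-> I (absz k)%:R).
Proof.
move=> _ h0 hB; have hN x : I x -> I (- x) by move=> hx; rewrite -sub0r; apply: hB.
case: k => m /=; first by [].
have -> : (Negz m)%:~R = - (m.+1)%:R :> T by [].
split; first by move=> /hN; rewrite opprK. exact: hN.
Qed.

Lemma Z1_noeth : noetherian_module Z1 Z1.
Proof.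
apply: noeth_intro => Ns hs hc.
have hB n x y : Ns n x -> Ns n y -> Ns n (x - y) by case: (hs n) => _ _ h _; apply: h.
have h0 n : Ns n 0 by case: (hs n).
have hZ n r x : Z1 r -> Ns n x -> Ns n (r * x) by case: (hs n) => _ _ _; apply.
have hZ1 n x : Ns n x -> Z1 x by case: (hs n) => + _ _ _; apply.
pose U m := (0 < m)%N /\ exists n, Ns n m%:R.
case: (classic (exists m, U m)) => [hex|hno].
  have [d [[hd0 [N hN]] hmin]] := least_nat hex.
  exists N => n hn x hx; have [k hk] := hZ1 _ _ hx; subst x.
  apply/(Z1_absz _ Z1_csub.1 (h0 N) (hB N)); move/(Z1_absz _ Z1_csub.1 (h0 n) (hB n)): hx.
  set m := absz k => hm.
  have hdn : Ns n d%:R by apply: chain_le hN.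
  have hr : Ns n (m %% d)%:R.
    have -> : (m %% d)%:R = m%:R - (m %/ d)%:R * d%:R :> T.
      by rewrite {2}(divn_eq m d) natrD natrM addrAC subrr add0r.
    by apply: hB => //; apply: hZ => //; exists (m %/ d)%:Z.
  have hr0 : (m %% d = 0)%N.
    apply/eqP; rewrite eqn0Ngt; apply/negP => hpos.
    have := hmin _ (conj hpos (ex_intro _ n hr)); rewrite leqNgt ltn_mod hd0 //.
  rewrite (divn_eq m d) hr0 addn0 natrM; apply: hZ => //; by exists (m %/ d)%:Z.
exists 0%N => n _ x hx; have [k hk] := hZ1 _ _ hx; subst x.
move/(Z1_absz _ Z1_csub.1 (h0 n) (hB n)): hx => hm.
apply/(Z1_absz _ Z1_csub.1 (h0 0%N) (hB 0%N)).
case: (posnP (absz k)) => [->|hp]; first exact: h0.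
by exfalso; apply: hno; exists (absz k); split => //; exists n.
Qed.


Definition adjoin A (s : T) : T -> Prop :=
  fun y => exists d (b : nat -> T), (forall i, A (b i)) /\ y = \sum_(i < d) b i * s ^+ i.

Lemma adj_pad A s d d' (b : nat -> T) : A 0 -> (forall i, A (b i)) -> (d <= d')%N ->
  exists b' : nat -> T, (forall i, A (b' i)) /\
    \sum_(i < d) b i * s ^+ i = \sum_(i < d') b' i * s ^+ i.
Proof.
move=> h0 hb hd; exists (fun i => if (i < d)%N then b i else 0); split.
  by move=> i; case: ifP.
rewrite (big_ord_widen d' (fun i => b i * s ^+ i) hd) big_mkcond /=.
by apply: eq_bigr => i _; case: ifP => //; rewrite mul0r.
Qed.

Section Adjoin.
Variables (A : T -> Prop) (s : T).
Hypothesis hA : csub A.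
Let hAs := hA.1.

Lemma adj0 : adjoin A s 0.
Proof. by exists 0%N, (fun _ => 0); split; [move=> _; apply: sub_0|rewrite big_ord0]. Qed.

Lemma adjB x y : adjoin A s x -> adjoin A s y -> adjoin A s (x - y).
Proof.
move=> [d [b [hb ->]]] [e [c [hc ->]]].
have [b' [hb' ->]] := adj_pad s (sub_0 hAs) hb (leq_maxl d e).
have [c' [hc' ->]] := adj_pad s (sub_0 hAs) hc (leq_maxr d e).
exists (maxn d e), (fun i => b' i - c' i); split; first by move=> i; apply: sub_B.
by rewrite -sumrB; apply: eq_bigr => i _; rewrite mulrBl.
Qed.

Lemma adjD x y : adjoin A s x -> adjoin A s y -> adjoin A s (x + y).
Proof. move=> hx hy; have -> : x + y = x - (0 - y) by rewrite sub0r opprK. by apply: adjB => //; apply: adjB => //; apply: adj0.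
Qed.

Lemma adj_sum d (F : nat -> T) : (forall i, (i < d)%N -> adjoin A s (F i)) ->
  adjoin A s (\sum_(i < d) F i).
Proof.
elim: d => [|d IH] h; first by rewrite big_ord0; apply: adj0.
rewrite big_ord_recr /=; apply: adjD => //; last exact: h.
by apply: IH => i hi; apply: h; apply: ltnW.
Qed.

Lemma adjA a : A a -> adjoin A s a.
Proof. by move=> ha; exists 1%N, (fun _ => a); split => //; rewrite big_ord1 expr0 mulr1. Qed.

Lemma adj_s : adjoin A s s.
Proof.
exists 2%N, (fun i => if i == 1%N then 1 else 0); split.
  by move=> i; case: ifP => _; [apply: sub_1|apply: sub_0].
by rewrite big_ord_recr big_ord1 /= mul0r add0r mul1r expr1.
Qed.

Lemma adjZ r y : A r -> adjoin A s y -> adjoin A s (r * y).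
Proof.
move=> hr [d [b [hb ->]]]; exists d, (fun i => r * b i); split; first by move=> i; apply: sub_M.
by rewrite mulr_sumr; apply: eq_bigr => i _; rewrite mulrA.
Qed.

Hypothesis hs : central s.

Lemma adj_central y : adjoin A s y -> central y.
Proof.
move=> [d [b [hb ->]]]; apply: (@sub_sum (@central T) d (fun i => b i * s ^+ i) center_sub) => i _.
by apply: centralM; [apply: hA.2|apply: centralX].
Qed.

Lemma adj_muls y : adjoin A s y -> adjoin A s (s * y).
Proof.
move=> [d [b [hb ->]]]; exists d.+1, (fun i => if i is i'.+1 then b i' else 0); split.
  by case=> [|i] //; apply: sub_0.
rewrite big_ord_recl /= mul0r add0r mulr_sumr; apply: eq_bigr => i _.
rewrite exprS !mulrA (hA.2 _ (hb i)) //.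
Qed.

Lemma adjM x y : adjoin A s x -> adjoin A s y -> adjoin A s (x * y).
Proof.
move=> hx [e [c [hc ->]]]; rewrite mulr_sumr; apply: (adj_sum (F := fun j => x * (c j * s ^+ j))) => j _.
have -> : x * (c j * s ^+ j) = c j * (s ^+ j * x).
  have hxc := adj_central hx.
  by rewrite mulrA hxc -mulrA (centralX j hs x).
apply: adjZ => //; elim: j => [|j IH]; first by rewrite expr0 mul1r.
by rewrite exprS -mulrA; apply: adj_muls.
Qed.

Lemma adj_csub : csub (adjoin A s).
Proof.
split; last exact: adj_central.
split; first by apply: adjA; apply: sub_1.
by move=> x y hx hy; split; [apply: adjB|apply: adjM].
Qed.

End Adjoin.

Section Hilbert.
Variables (A : T -> Prop) (s : T).
Hypotheses (hA : csub A) (hs : central s) (hAn : noetherian_module A A).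
Let hAs := hA.1.

Lemma hilbert : noetherian_module (adjoin A s) (adjoin A s).
Proof.
apply: noeth_intro => I hI hc.
have hIB n x : I n x -> adjoin A s x by case: (hI n) => + _ _ _; apply.
have hI0 n : I n 0 by case: (hI n).
have hIsub n x y : I n x -> I n y -> I n (x - y) by case: (hI n) => _ _ h _; apply: h.
have hIm n r x : adjoin A s r -> I n x -> I n (r * x) by case: (hI n) => _ _ _ h; apply: h.
pose L n d a := A a /\ exists b : nat -> T, (forall i, A (b i)) /\
   I n (a * s ^+ d + \sum_(i < d) b i * s ^+ i).
have L_sub n d : is_submodule A A (L n d).
  split.
  - by move=> a [].
  - split; first exact: sub_0.
    exists (fun _ => 0); split; first by move=> _; apply: sub_0.
    by rewrite mul0r add0r big1 // => i _; rewrite mul0r.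
  - move=> a a' [ha [b [hb hab]]] [ha' [b' [hb' hab']]]; split; first exact: sub_B.
    exists (fun i => b i - b' i); split; first by move=> i; apply: sub_B.
    have -> : (a - a') * s ^+ d + \sum_(i < d) (b i - b' i) * s ^+ i =
      (a * s ^+ d + \sum_(i < d) b i * s ^+ i) - (a' * s ^+ d + \sum_(i < d) b' i * s ^+ i).
      rewrite mulrBl (eq_bigr (fun i : 'I_d => b i * s ^+ i - b' i * s ^+ i)); last by move=> i _; rewrite mulrBl.
      by rewrite sumrB opprD addrACA.
    exact: hIsub.
  - move=> r a hr [ha [b [hb hab]]]; split; first exact: sub_M.
    exists (fun i => r * b i); split; first by move=> i; apply: sub_M.
    have -> : r * a * s ^+ d + \sum_(i < d) r * b i * s ^+ i = r * (a * s ^+ d + \sum_(i < d) b i * s ^+ i).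
      by rewrite mulrDr mulr_sumr mulrA; congr (_ + _); apply: eq_bigr => i _; rewrite mulrA.
    by apply: hIm => //; apply: adjA.
have L_mono_n n n' d : (n <= n')%N -> psubset (L n d) (L n' d).
  move=> hn a [ha [b [hb hab]]]; split => //; exists b; split => //; exact: chain_le hab.
have L_mono_d1 n d : psubset (L n d) (L n d.+1).
  move=> a [ha [b [hb hab]]]; split => //.
  pose bs := fun k : nat => if k is k'.+1 then b k' else 0.
  exists bs; split; first by case=> [|i]; rewrite /bs //; apply: (sub_0 hAs).
  have -> : a * s ^+ d.+1 + \sum_(i < d.+1) bs i * s ^+ i =
     s * (a * s ^+ d + \sum_(i < d) b i * s ^+ i).
    rewrite big_ord_recl /= mul0r add0r mulrDr mulr_sumr; congr (_ + _).
      by rewrite exprS !mulrA (hA.2 _ ha).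
    by apply: eq_bigr => i _; rewrite exprS !mulrA (hA.2 _ (hb i)).
  by apply: hIm => //; apply: adj_s.
have L_mono n n' d d' : (n <= n')%N -> (d <= d')%N -> psubset (L n d) (L n' d').
  move=> hn hd a ha; apply: (L_mono_n n) => //.
  exact: (@chain_le (fun d => L n d) d d' (fun k => L_mono_d1 n k) hd a ha).
have [N0 hN0] := noeth_elim hAn (Ns := fun n => L n n) (fun n => L_sub n n)
  (fun n => L_mono n n.+1 n n.+1 (leqnSn n) (leqnSn n)).
have hf d : exists N, forall n, (N <= n)%N -> psubset (L n d) (L N d).
  exact: (noeth_elim hAn (Ns := fun n => L n d) (fun n => L_sub n d) (fun n => L_mono_n n n.+1 d (leqnSn n))).
pose f d := proj1_sig (constructive_indefinite_description _ (hf d)).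
have hfP d : forall n, (f d <= n)%N -> psubset (L n d) (L (f d) d).
  exact: (proj2_sig (constructive_indefinite_description _ (hf d))).
pose N := maxn N0 (\max_(d < N0) f d).
have hfN d : (d < N0)%N -> (f d <= N)%N.
  move=> hd; rewrite /N leq_max; apply/orP; right.
  exact: (leq_bigmax (F := fun d : 'I_N0 => f d) (Ordinal hd)).
have hL n d : (N <= n)%N -> psubset (L n d) (L N d).
  move=> hn a ha; case: (ltnP d N0) => hd.
    apply: (L_mono (f d) N d d) => //; first exact: hfN.
    exact: (hfP d n (leq_trans (hfN d hd) hn) a ha).
  have hN0N : (N0 <= N)%N := leq_maxl _ _.
  apply: (L_mono N0 N N0 d) => //; apply: (hN0 (maxn n d)).
    exact: (leq_trans hd (leq_maxr n d)).
  by apply: (L_mono n _ d) => //; [apply: leq_maxl|apply: leq_maxr].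
exists N => n hn.
suff key : forall d (b : nat -> T) y, (forall i, A (b i)) -> y = \sum_(i < d) b i * s ^+ i ->
    I n y -> I N y.
  by move=> y hy; have [d [b [hb hyb]]] := hIB n y hy; apply: (key d b).
elim=> [|d IH] b y0 hb ->; first by rewrite big_ord0 => _; apply: hI0.
rewrite big_ord_recr /= => hy.
have hbd : L n d (b d) by split => //; exists b; split => //; rewrite addrC.
have [_ [b' [hb' hz]]] := hL n d hn _ hbd.
set z := b d * s ^+ d + _ in hz.
set y := _ + _ in hy *.
have hsum : \sum_(i < d) (b i - b' i) * s ^+ i =
    \sum_(i < d) b i * s ^+ i - \sum_(i < d) b' i * s ^+ i.
  by rewrite -sumrB; apply: eq_bigr => i _; rewrite mulrBl.
have hyz' : y - z = \sum_(i < d) (b i - b' i) * s ^+ i.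
  by rewrite hsum /y /z opprD addrA addrK.
have hyz : I N (y - z).
  rewrite hyz'; apply: (IH (fun i => b i - b' i)) => //; first by move=> i; apply: sub_B.
  rewrite -hyz'; apply: (hIsub n) => //; apply: (chain_le hc hn); exact: hz.
have -> : y = (y - z) - (0 - z) by rewrite sub0r opprK subrK.
apply: (hIsub N) => //; apply: (hIsub N) => //; exact: hI0.
Qed.

End Hilbert.

Lemma sm_add R M (N : T -> Prop) x y : is_submodule R M N -> N x -> N y -> N (x + y).
Proof.
case=> _ h0 hB _ hx hy; have -> : x + y = x - (0 - y) by rewrite sub0r opprK.
exact: (hB _ _ hx (hB _ _ h0 hy)).
Qed.

Lemma mem_body (k k' : T) ks : k' \in ks -> k' \in k :: ks.
Proof. by move=> h; rewrite inE h orbT. Qed.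

Section FinMod.
Variable A : T -> Prop.
Hypotheses (hA : is_subring A) (hAn : noetherian_module A A).

Lemma span_noeth xs : noetherian_module A (span A xs).
Proof.
elim: xs => [|x xs IH].
  apply: noeth_intro => Ns hs hc; exists 0%N => n _ y hy.
  have hy0 : y = 0 by case: (hs n) => + _ _ _; apply.
  by rewrite hy0; case: (hs 0%N).
apply: noeth_intro => Ns hs hc.
pose N' n := fun m => span A xs m /\ Ns n m.
have hN' n : is_submodule A (span A xs) (N' n).
  have [h1 h2 h3 h4] := hs n; split.
  - by move=> m [].
  - by split; [apply: span0|].
  - by move=> m m' [? ?] [? ?]; split; [apply: spanB|apply: h3].
  - by move=> r m hr [? ?]; split; [apply: spanZ|apply: h4].
have [N1 hN1] := noeth_elim IH hN' (fun n m hm => conj hm.1 (hc n m hm.2)).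
pose P n := fun a => A a /\ exists m, span A xs m /\ Ns n (a * x + m).
have hP n : is_submodule A A (P n).
  have [h1 h2 h3 h4] := hs n; split.
  - by move=> a [].
  - split; first exact: sub_0.
    by exists 0; split; [apply: span0|rewrite mul0r addr0].
  - move=> a a' [ha [m [hm h]]] [ha' [m' [hm' h']]]; split; first exact: sub_B.
    exists (m - m'); split; first exact: spanB.
    have -> : (a - a') * x + (m - m') = (a * x + m) - (a' * x + m').
      by rewrite mulrBl opprD addrACA.
    exact: h3.
  - move=> r a hr [ha [m [hm h]]]; split; first exact: sub_M.
    exists (r * m); split; first exact: spanZ.
    by rewrite -mulrA -mulrDr; apply: h4.
have [N2 hN2] := noeth_elim hAn hP (fun n a ha => match ha with conj h1 (ex_intro m (conj h2 h3)) => conj h1 (ex_intro _ m (conj h2 (hc n _ h3))) end).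
exists (maxn N1 N2) => n hn y hy.
have hyM : span A (x :: xs) y by case: (hs n) => + _ _ _; apply.
have [a [m [ha hm hya]]] := hyM.
have haP : P n a by split => //; exists m; split => //; rewrite -hya.
have haPN : P (maxn N1 N2) a.
  apply: (chain_le (Ns := P) (fun k => fun a ha => match ha with conj h1 (ex_intro m (conj h2 h3)) => conj h1 (ex_intro _ m (conj h2 (hc k _ h3))) end) (leq_maxr N1 N2)).
  by apply: (hN2 n) => //; apply: leq_trans hn; apply: leq_maxr.
have [_ [m' [hm' hz]]] := haPN.
have hmm : N' (maxn N1 N2) (m - m').
  apply: (chain_le (Ns := N') (fun k m hm => conj hm.1 (hc k m hm.2)) (leq_maxl N1 N2)).
  apply: (hN1 n); first by apply: leq_trans hn; apply: leq_maxl.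
  split; first exact: spanB.
  have -> : m - m' = y - (a * x + m') by rewrite hya opprD addrACA subrr add0r.
  have [_ _ h3 _] := hs n; apply: h3 => //.
  exact: (chain_le hc hn).
have -> : y = (a * x + m') + (m - m') by rewrite hya -addrA [m' + _]addrCA subrr addr0.
by apply: (sm_add (hs _)) => //; case: hmm.
Qed.

End FinMod.

Section Int.
Variable A : T -> Prop.
Hypothesis hA : csub A.
Let hAs := hA.1.

Lemma adj_quad k al be : central k -> A al -> A be -> k * k = al * k - be ->
  psubset (adjoin A k) (span A [:: 1; k]).
Proof.
move=> hk hal hbe hkk.
have hpow i : span A [:: 1; k] (k ^+ i).
  elim: i => [|i [a [m [ha [b [m0 [hb h0 hm]]] hz]]]].
    by rewrite expr0; apply: span_in => //; rewrite inE eqxx.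
  rewrite exprS hz hm h0 /=; exists (- (b * be)), ((a + b * al) * k + 0); split.
  - by apply: sub_N => //; apply: sub_M.
  - exists (a + b * al), 0; split => //; by apply: sub_D => //; apply: sub_M.
  rewrite !addr0 mulr1 mulrDr (hk a) mulrA (hk b) -mulrA hkk mulrBr mulrA.
  by rewrite mulr1 mulrDl [RHS]addrC -addrA.
move=> y [d [b [hb ->]]].
apply: (span_sum (F := fun i => b i * k ^+ i)) => // i _.
exact: spanZ.
Qed.

End Int.

Definition Adj (A : T -> Prop) (ks : seq T) := foldl adjoin A ks.

Lemma adjoin_mono A B s : psubset A B -> psubset (adjoin A s) (adjoin B s).
Proof. by move=> h y [d [b [hb ->]]]; exists d, b; split => // i; apply: h. Qed.

Lemma Adj_csub A ks : csub A -> (forall k, k \in ks -> central k) -> csub (Adj A ks).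
Proof.
rewrite /Adj; elim: ks A => [|k ks IH] A /=; first by [].
move=> hA hks; apply: IH; first exact: (adj_csub hA (hks k (mem_head _ _))).
by move=> k' hk'; apply: hks; rewrite inE hk' orbT.
Qed.

Lemma Adj_noeth A ks : csub A -> (forall k, k \in ks -> central k) -> noetherian_module A A ->
  noetherian_module (Adj A ks) (Adj A ks).
Proof.
rewrite /Adj; elim: ks A => [|k ks IH] A /=; first by [].
move=> hA hks hn; apply: IH.
- exact: (adj_csub hA (hks k (mem_head _ _))).
- by move=> k' hk'; apply: hks; rewrite inE hk' orbT.
- exact: (hilbert (s:=k) hA hn).
Qed.

Lemma Adj_incl A ks : csub A -> (forall k, k \in ks -> central k) -> psubset A (Adj A ks).
Proof.
rewrite /Adj; elim: ks A => [|k ks IH] A /=; first by move=> _ _ y.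
move=> hA hks y hy; apply: IH.
- exact: (adj_csub hA (hks k (mem_head _ _))).
- by move=> k' hk'; apply: hks; rewrite inE hk' orbT.
- by apply: adjA => //; apply: hA.
Qed.

Lemma Adj_in A ks k : csub A -> (forall k, k \in ks -> central k) -> k \in ks -> Adj A ks k.
Proof.
rewrite /Adj; elim: ks A => [|k0 ks IH] A //=.
move=> hA hks; rewrite inE => /orP [/eqP ->|hk].
  apply: (Adj_incl (ks := ks)).
  - exact: (adj_csub hA (hks k0 (mem_head _ _))).
  - by move=> k' hk'; apply: hks; rewrite inE hk' orbT.
  - by apply: adj_s; apply: hA.
apply: IH => //.
- exact: (adj_csub hA (hks k0 (mem_head _ _))).
- by move=> k' hk'; apply: hks; rewrite inE hk' orbT.
Qed.

Lemma Adj_min A ks S : is_subring S -> psubset A S -> (forall k, k \in ks -> S k) ->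
  psubset (Adj A ks) S.
Proof.
rewrite /Adj; elim: ks A => [|k ks IH] A //= hS hAS hks; apply: IH => //.
- move=> y [d [b [hb ->]]]; apply: (sub_sum (F := fun i => b i * k ^+ i)) => // i _.
  apply: sub_M => //; first exact: hAS.
  by apply: sub_X => //; apply: hks; rewrite inE eqxx.
- by move=> k' hk'; apply: hks; rewrite inE hk' orbT.
Qed.

Lemma Adj_span A ks : csub A ->
  (forall k, k \in ks -> central k /\ exists al be, [/\ A al, A be & k * k = al * k - be]) ->
  exists L, psubset (Adj A ks) (span A L).
Proof.
rewrite /Adj; elim: ks A => [|k ks IH] A /= hA hks.
  by exists [:: 1] => y hy; exists y, 0; split => //; rewrite mulr1 addr0.
have [hk [al [be [hal hbe hkk]]]] := hks k (mem_head _ _).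
have hA' : csub (adjoin A k) by apply: adj_csub.
have hks' : forall k', k' \in ks -> central k' /\
    exists al be, [/\ adjoin A k al, adjoin A k be & k' * k' = al * k' - be].
  move=> k' hk'; have [hc [al' [be' [h1 h2 h3]]]] := hks k' (mem_body k hk').
  by split => //; exists al', be'; split => //; apply: adjA => //; apply: hA.1.
have [L hL] := IH (adjoin A k) hA' hks'.
exists (tlist [:: 1; k] L) => y hy; apply: span_trans (hL y hy).
exact: adj_quad hal hbe hkk.
Qed.


Lemma Z1_min S : is_subring S -> psubset Z1 S.
Proof.
move=> hS x [k ->]; case: k => m; first exact: sub_nat.
have -> : (Negz m)%:~R = - (m.+1)%:R :> T by [].
by apply: sub_N => //; apply: sub_nat.
Qed.

Lemma span_lmul A (M : T -> Prop) xs u z :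
  is_subring A -> (forall a, A a -> central a) ->
  M 0 -> (forall x y, M x -> M y -> M (x + y)) -> (forall a x, A a -> M x -> M (a * x)) ->
  (forall w, w \in xs -> M (u * w)) -> span A xs z -> M (u * z).
Proof.
move=> hA hc h0 hD hZ; elim: xs z => [|w xs IH] z hw /=; first by move=> ->; rewrite mulr0.
move=> [a [m [ha hm ->]]]; rewrite mulrDr mulrA -(hc a ha u) -mulrA.
apply: hD; first by apply: hZ => //; apply: hw; rewrite inE eqxx.
by apply: IH => // w' hw'; apply: hw; rewrite inE hw' orbT.
Qed.

Lemma span_rmul A (M : T -> Prop) xs y z :
  is_subring A ->
  M 0 -> (forall x y, M x -> M y -> M (x + y)) -> (forall a x, A a -> M x -> M (a * x)) ->
  (forall w, w \in xs -> M (w * z)) -> span A xs y -> M (y * z).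
Proof.
move=> hA h0 hD hZ; elim: xs y => [|w xs IH] y hw /=; first by move=> ->; rewrite mul0r.
move=> [a [m [ha hm ->]]]; rewrite mulrDl -mulrA.
apply: hD; first by apply: hZ => //; apply: hw; rewrite inE eqxx.
by apply: IH => // w' hw'; apply: hw; rewrite inE hw' orbT.
Qed.

Section Main.
Variables (bar : T -> T) (lambda : T) (n : nat) (g : 'I_n -> T) (coef : T -> 'I_n -> T).
Hypotheses (hbar : is_involution bar)
  (hcoef : forall x, (forall i, central (coef x i)) /\ x = \sum_(i < n) coef x i * g i).

Lemma barD x y : bar (x + y) = bar x + bar y. Proof. by case: hbar. Qed.
Lemma barM x y : bar (x * y) = bar y * bar x. Proof. by case: hbar. Qed.
Lemma barK x : bar (bar x) = x. Proof. by case: hbar. Qed.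
Lemma bar0 : bar 0 = 0.
Proof. by apply: (addrI (bar 0)); rewrite -barD !addr0. Qed.
Lemma barN x : bar (- x) = - bar x.
Proof. by apply/eqP; rewrite -subr_eq0 opprK -barD addNr bar0. Qed.
Lemma barB x y : bar (x - y) = bar x - bar y. Proof. by rewrite barD barN. Qed.
Lemma bar1 : bar 1 = 1.
Proof.
have h x : bar x = bar 1 * bar x by rewrite -barM mulr1.
by have := h (bar 1); rewrite barK mulr1 => <-.
Qed.
Lemma bar_central c : central c -> central (bar c).
Proof. by move=> hc y; rewrite -{1}(barK y) -barM -hc barM barK. Qed.

Lemma NS_sub (C : T -> Prop) : is_subring C -> (forall c, C c -> central c) ->
  is_subring (norm_sums bar C).
Proof.
move=> hC hcC; split.
  exists [:: (false, 1)]; split; first by move=> p; rewrite inE => /eqP -> /=; apply: sub_1.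
  by rewrite big_cons big_nil /= expr0 bar1 !mul1r addr0.
move=> x y [sx [hsx ->]] [sy [hsy ->]]; split.
  exists (sx ++ map (fun p => (~~ p.1, p.2)) sy); split.
    move=> p; rewrite mem_cat => /orP [/hsx //|/mapP [q hq ->]] /=; exact: hsy.
  rewrite big_cat big_map /= -sumrN; congr (_ + _); apply: eq_bigr => [[b c]] _ /=.
  by case: b; rewrite /= ?expr1 ?expr0 ?mulN1r ?mul1r ?opprK.
exists [seq (p.1 (+) q.1, p.2 * q.2) | p <- sx, q <- sy]; split.
  move=> p /allpairsP [[p1 q1] [h1 h2 ->]] /=; apply: sub_M => //; [exact: hsx|exact: hsy].
rewrite big_allpairs_dep /= mulr_suml !big_seq; apply: eq_bigr => [[a c]] ha /=.
rewrite mulr_sumr !big_seq; apply: eq_bigr => [[b d]] hb /=.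
have hc : central c := hcC _ (hsx (a, c) ha).
have hd : central d := hcC _ (hsy (b, d) hb).
have hbc := bar_central hc; have hbd := bar_central hd.
have -> : c * d * bar (c * d) = c * bar c * (d * bar d).
  by rewrite barM -!mulrA; congr (_ * _); rewrite [bar c * _]hbc -!mulrA.
by move: ha hb; case: a; case: b => _ _; rewrite /= ?expr1 ?expr0 ?mulN1r ?mul1r ?mulNr ?mulrN ?opprK.
Qed.

Definition gs := [seq g i | i <- index_enum 'I_n].
Definition xsl (s : seq T) := s ++ [:: 1; lambda] ++
  [seq g i * g k | i <- index_enum 'I_n, k <- index_enum 'I_n] ++ [seq bar (g i) | i <- index_enum 'I_n].
Definition K0 s := [seq coef x l | x <- xsl s, l <- index_enum 'I_n].
Definition ks s := K0 s ++ map bar (K0 s).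
Definition Cp s := gen (fun y => y \in ks s).
Definition Tj s := span (Cp s) gs.

Lemma ks_coef s x l : x \in xsl s -> coef x l \in ks s.
Proof. by move=> hx; rewrite mem_cat (allpairs_f coef hx (mem_index_enum l)). Qed.
Lemma ks_barcoef s x l : x \in xsl s -> bar (coef x l) \in ks s.
Proof. by move=> hx; rewrite mem_cat map_f ?orbT // (allpairs_f coef hx (mem_index_enum l)). Qed.
Lemma ks_inv s y : y \in ks s -> exists x l, x \in xsl s /\ (y = coef x l \/ y = bar (coef x l)).
Proof.
rewrite mem_cat => /orP [/allpairsP [[x l] [hx _ ->]]|/mapP [z /allpairsP [[x l] [hx _ ->]] ->]].
  by exists x, l; split => //; left.
by exists x, l; split => //; right.
Qed.
Lemma ks_central s y : y \in ks s -> central y.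
Proof.
move/ks_inv => [x [l [_ [->|->]]]]; first exact: (hcoef x).1.
by apply: bar_central; exact: (hcoef x).1.
Qed.
Lemma ks_bar s y : y \in ks s -> bar y \in ks s.
Proof.
move/ks_inv => [x [l [hx [->|->]]]]; first exact: ks_barcoef.
by rewrite barK; apply: ks_coef.
Qed.
Lemma ks_mono s s' : (forall x, x \in xsl s -> x \in xsl s') -> forall y, y \in ks s -> y \in ks s'.
Proof.
move=> h y /ks_inv [x [l [hx [->|->]]]]; [apply: ks_coef|apply: ks_barcoef]; exact: h.
Qed.

Lemma Cp_sub s : is_subring (Cp s). Proof. exact: gen_sub. Qed.
Lemma Cp_central s y : Cp s y -> central y.
Proof. by move=> hy; apply: (gen_min center_sub) hy => z; apply: ks_central. Qed.
Lemma Cp_bar s y0 : Cp s y0 -> Cp s (bar y0).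
Proof.
move=> hy; apply: (gen_min (S := fun x => Cp s (bar x))) hy; last first.
  by move=> z hz; apply: gen_in; apply: ks_bar.
split; first by rewrite bar1; exact: (sub_1 (Cp_sub s)).
move=> x y hx hy; split; first by rewrite barB; exact: (sub_B (Cp_sub s) hx hy).
by rewrite barM; exact: (sub_M (Cp_sub s) hy hx).
Qed.
Lemma Cp_ks s y : y \in ks s -> Cp s y.
Proof. exact: gen_in. Qed.

Lemma span_gs_gen (A : T -> Prop) (c : 'I_n -> T) (r : seq 'I_n) : is_subring A -> (forall i, A (c i)) ->
  span A [seq g i | i <- r] (\sum_(i <- r) c i * g i).
Proof.
move=> hA hc; elim: r => [|i r IH] /=; first by rewrite big_nil.
by rewrite big_cons; exists (c i), (\sum_(j <- r) c j * g j); split.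
Qed.

Lemma Tj_xsl s x : x \in xsl s -> Tj s x.
Proof.
move=> hx; have [_ ->] := hcoef x; apply: span_gs_gen; first exact: Cp_sub.
by move=> l; apply: Cp_ks; apply: ks_coef.
Qed.

Lemma Tj_gg s i k : Tj s (g i * g k).
Proof.
apply: Tj_xsl; rewrite /xsl !mem_cat; apply/orP; right; apply/orP; right.
by rewrite (allpairs_f (fun i k => g i * g k) (mem_index_enum i) (mem_index_enum k)).
Qed.

Lemma Tj_barg s i : Tj s (bar (g i)).
Proof.
apply: Tj_xsl; rewrite /xsl !mem_cat; apply/orP; right; apply/orP; right; apply/orP; right.
by rewrite map_f // mem_index_enum.
Qed.

Lemma Tj_add s : forall x y, Tj s x -> Tj s y -> Tj s (x + y).
Proof. by move=> x y; apply: spanD; apply: Cp_sub. Qed.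
Lemma Tj_scal s : forall a x, Cp s a -> Tj s x -> Tj s (a * x).
Proof. by move=> a x; apply: spanZ; apply: Cp_sub. Qed.
Lemma Tj0 s : Tj s 0.
Proof. by apply: span0; apply: Cp_sub. Qed.

Lemma in_gs w : w \in gs -> exists i, w = g i.
Proof. by move/mapP => [i _ ->]; exists i. Qed.

Lemma Tj_mul s y z : Tj s y -> Tj s z -> Tj s (y * z).
Proof.
move=> hy hz; apply: (span_rmul (Cp_sub s) (Tj0 s) (@Tj_add s) (@Tj_scal s)) hy => w /in_gs [i ->].
apply: (span_lmul (Cp_sub s) (@Cp_central s) (Tj0 s) (@Tj_add s) (@Tj_scal s)) hz => w' /in_gs [k ->].
exact: Tj_gg.
Qed.

Lemma Tj_bar s y : Tj s y -> Tj s (bar y).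
Proof.
have hgs : forall w, w \in gs -> Tj s (bar w) by move=> w /in_gs [i ->]; apply: Tj_barg.
rewrite {1}/Tj; move: hgs; elim: gs y => [|w xs IH] y hw /=; first by move=> ->; rewrite bar0; apply: Tj0.
move=> [a [m [ha hm ->]]]; rewrite barD barM -(Cp_central (Cp_bar ha)).
apply: Tj_add; first by apply: Tj_scal; [apply: Cp_bar|apply: hw; rewrite inE eqxx].
by apply: IH => // w' hw'; apply: hw; rewrite inE hw' orbT.
Qed.

Lemma Tj_subring s : is_subring (Tj s).
Proof.
split; first by apply: Tj_xsl; rewrite /xsl !mem_cat inE eqxx orbT.
move=> x y hx hy; split; [by apply: spanB => //; apply: Cp_sub|exact: Tj_mul].
Qed.

Lemma Cp_Tj s : psubset (Cp s) (Tj s).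
Proof. by move=> c hc; rewrite -[c]mulr1; apply: Tj_scal => //; apply: (Tj_subring s).1. Qed.

Definition als s := [seq k + bar k | k <- ks s] ++ [seq k * bar k | k <- ks s].

Lemma als_central s a : a \in als s -> central a.
Proof.
rewrite mem_cat => /orP [] /mapP [k hk ->]; have hc := ks_central hk; have hbc := bar_central hc.
  exact: centralD.
exact: centralM.
Qed.

Lemma Tj_noeth s : noetherian_module (norm_sums bar (Cp s)) (Tj s).
Proof.
pose A0 := Adj Z1 (als s).
have hA0 : csub A0 by apply: Adj_csub; [apply: Z1_csub|apply: als_central].
have hA0n : noetherian_module A0 A0 by apply: Adj_noeth; [apply: Z1_csub|apply: als_central|apply: Z1_noeth].
have hA0in a : a \in als s -> A0 a by move=> ha; apply: Adj_in => //; [apply: Z1_csub|apply: als_central].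
have hCp : psubset (Cp s) (Adj A0 (ks s)).
  apply: gen_min; first by apply: (Adj_csub hA0 (@ks_central s)).1.
  by move=> y hy; apply: Adj_in => //; apply: ks_central.
have hks : forall k, k \in ks s -> central k /\ exists al be, [/\ A0 al, A0 be & k * k = al * k - be].
  move=> k hk.
  have hc := ks_central hk; split => //.
  exists (k + bar k), (k * bar k); split.
  - by apply: hA0in; rewrite mem_cat; apply/orP; left; apply: (map_f (fun k => k + bar k) hk).
  - by apply: hA0in; rewrite mem_cat; apply/orP; right; apply: (map_f (fun k => k * bar k) hk).
  - by rewrite mulrDl -(bar_central hc k) addrK.
have [L hL] := Adj_span hA0 hks.
apply: (noeth_scal (R' := A0)).
  apply: Adj_min; first by apply: NS_sub; [apply: Cp_sub|apply: Cp_central].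
    by apply: Z1_min; apply: NS_sub; [apply: Cp_sub|apply: Cp_central].
  move=> a; rewrite mem_cat => /orP [] /mapP [k hk ->].
    exists [:: (false, 1 + k); (true, 1); (true, k)]; split.
      move=> p; rewrite !inE => /orP [/eqP -> /=|/orP [/eqP -> /=|/eqP -> /=]].
      - exact: (sub_D (Cp_sub s) (sub_1 (Cp_sub s)) (Cp_ks hk)).
      - exact: (sub_1 (Cp_sub s)).
      - exact: Cp_ks.
    rewrite !big_cons big_nil /= expr0 expr1 !mulN1r !mul1r addr0 barD bar1.
    by rewrite mulrDl mul1r mulrDr mulr1; apply: zmod_aux.
  exists [:: (false, k)]; split; first by move=> p; rewrite inE => /eqP -> /=; apply: Cp_ks.
  by rewrite big_cons big_nil /= expr0 mul1r addr0.
apply: (noeth_mod (M' := span A0 (tlist L gs))).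
  by move=> y hy; apply: span_trans (span_mono (fun c hc => hL c (hCp c hc)) hy).
exact: span_noeth hA0.1 hA0n _.
Qed.


End Main.
End Aux.

Unset Implicit Arguments.
Set Strict Implicit.

Theorem lemma4p13 (T : nzRingType) (bar : T -> T) (lambda : T) :
  almost_commutative T ->
  is_involution bar ->
  central lambda ->
  exists (Psi : Type) (Tj : Psi -> T -> Prop),
    (* directed family *)
    (forall i j : Psi, exists k : Psi, psubset (Tj i) (Tj k) /\ psubset (Tj j) (Tj k)) /\
    (* whose union is T *)
    (forall x : T, exists j : Psi, Tj j x) /\
    forall j : Psi,
      [/\ is_subring (Tj j), inv_invariant bar (Tj j), Tj j lambda &
          exists C' : T -> Prop,
            [/\ is_subring C', in_center_of C' (Tj j) &
                noetherian_module (norm_sums bar C') (Tj j)]].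
Proof.
move=> [n [g hg]] hbar hlam.
pose coef x := proj1_sig (constructive_indefinite_description _ (hg x)).
have hcoef x : (forall i, central (coef x i)) /\ x = \sum_(i < n) coef x i * g i.
  exact: (proj2_sig (constructive_indefinite_description _ (hg x))).
have hxsl (s s' : seq T) : forall x, x \in xsl bar lambda g s -> x \in xsl bar lambda g (s ++ s').
  move=> x; rewrite /xsl !mem_cat => /orP [->|->] //; by rewrite ?orbT.
have hxsl' (s s' : seq T) : forall x, x \in xsl bar lambda g s' -> x \in xsl bar lambda g (s ++ s').
  move=> x; rewrite /xsl !mem_cat => /orP [->|->] //; by rewrite ?orbT.
exists (seq T), (fun s => Tj bar lambda g coef s); split.
  move=> i j; exists (i ++ j); split; apply: span_mono; apply: gen_mono => y;
    apply: ks_mono; [apply: hxsl|apply: hxsl'].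
split.
  move=> x; exists [:: x]; apply: Tj_xsl => //; by rewrite /xsl mem_cat inE eqxx.
move=> s; split.
- exact: Tj_subring.
- move=> y; exact: Tj_bar.
- by apply: Tj_xsl => //; rewrite /xsl !mem_cat !inE eqxx !orbT.
- exists (Cp bar lambda g coef s); split.
  + exact: Cp_sub.
  + split; first exact: Cp_Tj.
    by move=> c hc y _; apply: (Cp_central hbar hcoef hc).
  + exact: Tj_noeth.
Qed.
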